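(* Let $\mathbb H=\mathbb R$ or $\mathbb C$. Assume $(\mathbf A,\mathbf b)\in\mathbb H^{m\times(d+1)}$ is affine phase retrievable for $\mathbb H^d$ and let $\Omega\subset\mathbb H^d$ be a compact set. Then there exist positive constants $C_1,C_2,c_1,c_2$ depending on $(\mathbf A,\mathbf b)$ and $\Omega$ such that for all $\mathbf x,\mathbf y\in\Omega$, $$\frac{c_1}{1+\|\mathbf x\|+\|\mathbf y\|}\|\mathbf x-\mathbf y\|\le\|\mathbf M_{\mathbf A,\mathbf b}(\mathbf x)-\mathbf M_{\mathbf A,\mathbf b}(\mathbf y)\|\le C_1\|\mathbf x-\mathbf y\|,$$ $$c_2\|\mathbf x-\mathbf y\|\le\|\mathbf M^2_{\mathbf A,\mathbf b}(\mathbf x)-\mathbf M^2_{\mathbf A,\mathbf b}(\mathbf y)\|\le C_2(1+\|\mathbf x\|+\|\mathbf y\|)\|\mathbf x-\mathbf y\|.$$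
   Context: For $\mathbf u,\mathbf v\in\mathbb H^d$, $\langle\mathbf u,\mathbf v\rangle=\sum_i\overline{u_i}v_i$; $\|\cdot\|$ is the Euclidean norm. With $\mathbf A=(\mathbf a_1,\ldots,\mathbf a_m)^\top\in\mathbb H^{m\times d}$ and $\mathbf b=(b_1,\ldots,b_m)^\top\in\mathbb H^m$, $\mathbf M_{\mathbf A,\mathbf b}(\mathbf x)=(|\langle\mathbf a_1,\mathbf x\rangle+b_1|,\ldots,|\langle\mathbf a_m,\mathbf x\rangle+b_m|)$ and $\mathbf M^2_{\mathbf A,\mathbf b}(\mathbf x)=(|\langle\mathbf a_1,\mathbf x\rangle+b_1|^2,\ldots,|\langle\mathbf a_m,\mathbf x\rangle+b_m|^2)$. $(\mathbf A,\mathbf b)$ is affine phase retrievable for $\mathbb H^d$ if $\mathbf M_{\mathbf A,\mathbf b}$ is injective on $\mathbb H^d$. *)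

(* Defs.v *)
From HB Require Import structures.
From mathcomp Require Import all_boot all_order all_algebra.
From mathcomp Require Import all_classical all_reals topology normedtype.
From mathcomp Require Import complex.
Set Implicit Arguments. Unset Strict Implicit. Unset Printing Implicit Defensive.
Import Order.TTheory GRing.Theory Num.Theory.
Import numFieldNormedType.Exports.
Local Open Scope ring_scope.
Local Open Scope classical_set_scope.

(* The scalar field H is encoded by a type K together with the conjugation
   [conj : K -> K] (identity for H = R, complex conjugation for H = C) and the
   modulus [modu : K -> R] (|.| for R, the complex modulus for C). *)

Section Generic.
Variables (R : realType) (K : nzRingType) (conj : K -> K) (modu : K -> R).

Definition hdot (d : nat) (u v : 'rV[K]_d) : K :=
  \sum_(i < d) conj (u 0 i) * v 0 i.

Definition hnorm (d : nat) (v : 'rV[K]_d) : R :=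
  Num.sqrt (\sum_(i < d) modu (v 0 i) ^+ 2).

Definition rnorm (m : nat) (v : 'rV[R]_m) : R :=
  Num.sqrt (\sum_(i < m) v 0 i ^+ 2).

Definition Mab (m d : nat) (A : 'M[K]_(m, d)) (b : 'rV[K]_m) (x : 'rV[K]_d)
  : 'rV[R]_m := \row_(i < m) modu (hdot (row i A) x + b 0 i).

Definition M2ab (m d : nat) (A : 'M[K]_(m, d)) (b : 'rV[K]_m) (x : 'rV[K]_d)
  : 'rV[R]_m := \row_(i < m) modu (hdot (row i A) x + b 0 i) ^+ 2.

Definition affine_phase_retrievable (m d : nat) (A : 'M[K]_(m, d))
  (b : 'rV[K]_m) : Prop := injective (Mab A b).

Definition affine_stability_bounds (m d : nat) (A : 'M[K]_(m, d))
  (b : 'rV[K]_m) (Omega : set 'rV[K]_d) : Prop :=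
  exists C1 C2 c1 c2 : R,
    [/\ 0 < C1, 0 < C2, 0 < c1 & 0 < c2] /\
    forall x y, Omega x -> Omega y ->
      [/\ c1 / (1 + hnorm x + hnorm y) * hnorm (x - y)
            <= rnorm (Mab A b x - Mab A b y),
          rnorm (Mab A b x - Mab A b y) <= C1 * hnorm (x - y),
          c2 * hnorm (x - y) <= rnorm (M2ab A b x - M2ab A b y) &
          rnorm (M2ab A b x - M2ab A b y)
            <= C2 * (1 + hnorm x + hnorm y) * hnorm (x - y)].

End Generic.

(* Identification C^d = R^d x R^d (real and imaginary parts), which defines
   the standard topology on C^d. *)
Definition realify (R : realType) (d : nat) (x : 'rV[R[i]]_d)
  : 'rV[R]_d * 'rV[R]_d :=
  (\row_(j < d) complex.Re (x 0 j), \row_(j < d) complex.Im (x 0 j)).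

Definition compactC (R : realType) (d : nat) (Omega : set 'rV[R[i]]_d) : Prop :=
  compact (realify (R := R) (d := d) @` Omega).

Definition cmod (R : realType) (z : R[i]) : R :=
  Num.sqrt (complex.Re z ^+ 2 + complex.Im z ^+ 2).

(* Main.v *)
Require Import Defs.
From HB Require Import structures.
From mathcomp Require Import all_boot all_order all_algebra.
From mathcomp Require Import all_classical all_reals topology normedtype.
From mathcomp Require Import complex.
From mathcomp Require Import ring lra derive.
Import Order.TTheory GRing.Theory Num.Theory.
Import numFieldNormedType.Exports.
Local Open Scope ring_scope.
Local Open Scope classical_set_scope.
Section Gen.
Variables (R : realType) (K : numFieldType) (conj : K -> K) (modu : K -> R)
  (emb : R -> K) (Lre : K -> K -> R).
Hypothesis Hge0 : forall p, 0 <= modu p.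
Hypothesis HD : forall p q, modu (p + q) <= modu p + modu q.
Hypothesis HN : forall p, modu (- p) = modu p.
Hypothesis H0 : modu 0 = 0.
Hypothesis HM : forall a p, modu (conj a * p) = modu a * modu p.
Hypothesis HE : forall t p, modu (emb t * p) = `|t| * modu p.
Hypothesis HL : forall p q, modu p ^+ 2 - modu q ^+ 2 = Lre (p - q) (p + q).
Hypothesis HLs : forall t w s, Lre (emb t * w) s = t * Lre w s.

Lemma hdotD d (a u v : 'rV[K]_d) : hdot conj a (u + v) = hdot conj a u + hdot conj a v.
Proof. by rewrite /hdot -big_split; apply: eq_bigr => i _; rewrite mxE mulrDr. Qed.

Lemma hdotN d (a u : 'rV[K]_d) : hdot conj a (- u) = - hdot conj a u.
Proof. by rewrite /hdot -sumrN; apply: eq_bigr => i _; rewrite mxE mulrN. Qed.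

Lemma hdotB d (a u v : 'rV[K]_d) : hdot conj a (u - v) = hdot conj a u - hdot conj a v.
Proof. by rewrite hdotD hdotN. Qed.

Lemma hdotZ d (a u : 'rV[K]_d) c : hdot conj a (c *: u) = c * hdot conj a u.
Proof. by rewrite /hdot mulr_sumr; apply: eq_bigr => i _; rewrite mxE mulrCA. Qed.

Lemma modu_sum (I : Type) (r : seq I) (F : I -> K) :
  modu (\sum_(i <- r) F i) <= \sum_(i <- r) modu (F i).
Proof.
elim: r => [|x r IH]; first by rewrite !big_nil H0.
rewrite !big_cons; apply: le_trans (HD _ _) _; exact: lerD.
Qed.

Lemma hnorm_ge0 d (v : 'rV[K]_d) : 0 <= hnorm modu v.
Proof. exact: sqrtr_ge0. Qed.

Lemma coord_le_hnorm d (v : 'rV[K]_d) i : modu (v 0 i) <= hnorm modu v.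
Proof.
rewrite /hnorm -[leLHS]ger0_norm // -sqrtr_sqr ler_sqrt; last first.
  by apply: sumr_ge0 => j _; rewrite sqr_ge0.
rewrite (bigD1 i) //= lerDl; apply: sumr_ge0 => j _; exact: sqr_ge0.
Qed.

Lemma hdot_le {d} (a h : 'rV[K]_d) :
  modu (hdot conj a h) <= (\sum_i modu (a 0 i)) * hnorm modu h.
Proof.
apply: le_trans (modu_sum _ _ _) _; rewrite mulr_suml; apply: ler_sum => i _.
by rewrite HM ler_wpM2l // coord_le_hnorm.
Qed.

Lemma hnormZ d (v : 'rV[K]_d) t : hnorm modu (emb t *: v) = `|t| * hnorm modu v.
Proof.
rewrite /hnorm -[`|t|]ger0_norm // -sqrtr_sqr -sqrtrM ?sqr_ge0 //.
congr Num.sqrt; rewrite mulr_sumr; apply: eq_bigr => i _.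
by rewrite mxE HE exprMn real_normK ?num_real.
Qed.

Lemma modu_diff p q : `|modu p - modu q| <= modu (p - q).
Proof.
have h1 := HD (p - q) q; have h2 := HD (q - p) p.
rewrite subrK in h1; rewrite subrK -(HN (q - p)) opprB in h2.
rewrite ler_norml; apply/andP; split; lra.
Qed.

Variables (m d : nat) (A : 'M[K]_(m, d)) (b : 'rV[K]_m).

Definition Sj j (x y : 'rV[K]_d) :=
  hdot conj (row j A) x + hdot conj (row j A) y + (b 0 j + b 0 j).

Definition Phi (x y h : 'rV[K]_d) : R :=
  \sum_(j < m) (Lre (hdot conj (row j A) h) (Sj j x y)) ^+ 2.

Lemma M2_diff x y j :
  (M2ab conj modu A b x - M2ab conj modu A b y) 0 j =
  Lre (hdot conj (row j A) (x - y)) (Sj j x y).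
Proof.
rewrite !mxE HL hdotB /Sj; congr Lre; ring.
Qed.

Lemma rnorm_sq (n : nat) (v : 'rV[R]_n) : rnorm v ^+ 2 = \sum_j v 0 j ^+ 2.
Proof. by rewrite /rnorm sqr_sqrtr // sumr_ge0 // => j _; rewrite sqr_ge0. Qed.

Lemma hnorm0 : hnorm modu (0 : 'rV[K]_d) = 0.
Proof.
rewrite /hnorm big1 ?sqrtr0 // => i _; by rewrite mxE H0 expr0n.
Qed.

Lemma Phi_pos x y h : injective (Mab conj modu A b) -> hnorm modu h = 1 ->
  0 < Phi x y h.
Proof.
move=> Hinj h1.
case: (pselect (exists j, Lre (hdot conj (row j A) h) (Sj j x y) != 0)).
  move=> [j hj]; rewrite /Phi (bigD1 j) //=.
  set t := Lre _ _ in hj *.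
  have tp : 0 < t ^+ 2 by rewrite lt_def sqr_ge0 andbT sqrf_eq0.
  apply: lt_le_trans tp _.
  by rewrite lerDl sumr_ge0 // => i _; rewrite sqr_ge0.
move=> nex; exfalso.
have all0 : forall j, Lre (hdot conj (row j A) h) (Sj j x y) = 0.
  move=> j; apply/eqP; apply: contrapT => hj; apply: nex; exists j; exact/negP.
have two0 : (2 : K) != 0 by rewrite pnatr_eq0.
pose x' := (2 : K)^-1 *: (x + y + h); pose y' := (2 : K)^-1 *: (x + y - h).
have exy : x' - y' = h by apply/rowP => i; rewrite !mxE; field.
have sxy j : Sj j x' y' = Sj j x y.
  rewrite /Sj -!hdotD; have -> : x' + y' = x + y by apply/rowP => i; rewrite !mxE; field.
  by [].
have : x' = y'.
  apply: Hinj; apply/rowP => k; rewrite !mxE.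
  have := M2_diff x' y' k; rewrite exy sxy all0 !mxE => /eqP; rewrite subr_eq0 => /eqP e.
  by rewrite -(ger0_norm (Hge0 _)) -[in RHS](ger0_norm (Hge0 _)) -!sqrtr_sqr e.
move=> e; move: h1; rewrite -exy e subrr hnorm0 => /eqP; by rewrite eq_sym oner_eq0.
Qed.

Lemma lower2 (Omega : set 'rV[K]_d) c : 0 < c ->
  (forall x y h, Omega x -> Omega y -> hnorm modu h = 1 -> c <= Phi x y h) ->
  forall x y, Omega x -> Omega y ->
  Num.sqrt c * hnorm modu (x - y) <= rnorm (M2ab conj modu A b x - M2ab conj modu A b y).
Proof.
move=> c0 Hmin x y Ox Oy.
set t := hnorm modu (x - y).
have t0 : 0 <= t by exact: hnorm_ge0.
have [->|tn0] := eqVneq t 0; first by rewrite mulr0 sqrtr_ge0.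
have tp : 0 < t by rewrite lt_def tn0 t0.
set h := emb t^-1 *: (x - y).
have hn : hnorm modu h = 1.
  by rewrite hnormZ ger0_norm ?invr_ge0 // mulVf.
have := Hmin _ _ _ Ox Oy hn.
have -> : Phi x y h = t^-2 * rnorm (M2ab conj modu A b x - M2ab conj modu A b y) ^+ 2.
  rewrite rnorm_sq /Phi mulr_sumr; apply: eq_bigr => j _.
  rewrite M2_diff /h.
  have -> : hdot conj (row j A) (emb t^-1 *: (x - y)) = emb t^-1 * hdot conj (row j A) (x - y).
    by rewrite hdotZ.
  by rewrite HLs exprMn exprVn.
set r := rnorm _ => hc.
have r0 : 0 <= r by exact: sqrtr_ge0.
have : c * t ^+ 2 <= r ^+ 2.
  have e : r ^+ 2 = t ^+ 2 * (t ^- 2 * r ^+ 2) by rewrite mulrA mulfV ?mul1r // expf_neq0.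
  by rewrite e mulrC ler_wpM2l // exprn_ge0.
move=> h2.
have -> : Num.sqrt c * t = Num.sqrt (c * t ^+ 2) by rewrite sqrtrM ?ltW // sqrtr_sqr ger0_norm.
have -> : r = Num.sqrt (r ^+ 2) by rewrite sqrtr_sqr ger0_norm.
exact: ler_wsqrtr.
Qed.

Definition Kall := \sum_(j < m) \sum_(i < d) modu (A j i) + \sum_(j < m) modu (b 0 j) + 1.

Lemma Kall_ge1 : 1 <= Kall.
Proof.
rewrite /Kall lerDr addr_ge0 // sumr_ge0 // => j _ //; exact: sumr_ge0.
Qed.

Lemma dot_le j h : modu (hdot conj (row j A) h) <= Kall * hnorm modu h.
Proof.
apply: le_trans (hdot_le (row j A) h) _; apply: ler_wpM2r; first exact: hnorm_ge0.
have -> : \sum_i modu (row j A 0 i) = \sum_(i < d) modu (A j i).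
  by apply: eq_bigr => i _; rewrite mxE.
rewrite /Kall -addrA; apply: ler_wpDr; first by rewrite addr_ge0 // sumr_ge0.
by rewrite (bigD1 j) //= lerDl sumr_ge0 // => k _; rewrite sumr_ge0.
Qed.

Lemma u_le j x : modu (hdot conj (row j A) x + b 0 j) <= Kall * (1 + hnorm modu x).
Proof.
apply: le_trans (HD _ _) _; rewrite mulrDr mulr1 addrC lerD ?dot_le //.
have h1 : 0 <= \sum_(j < m) \sum_(i < d) modu (A j i).
  by apply: sumr_ge0 => k _; exact: sumr_ge0.
have h2 : modu (b 0 j) <= \sum_(j < m) modu (b 0 j).
  by rewrite (bigD1 j) //= lerDl sumr_ge0.
rewrite /Kall; lra.
Qed.

Lemma rnorm_unif (n : nat) (v : 'rV[R]_n) B : 0 <= B -> (forall j, `|v 0 j| <= B) ->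
  rnorm v <= (n%:R + 1) * B.
Proof.
move=> B0 hv; rewrite /rnorm -[X in _ <= X]ger0_norm ?mulr_ge0 ?addr_ge0 //.
rewrite -sqrtr_sqr; apply: ler_wsqrtr.
apply: le_trans (_ : \sum_(j < n) B ^+ 2 <= _).
  apply: ler_sum => j _; have := hv j; rewrite ler_norml => /andP[h1 h2]; nra.
rewrite sumr_const card_ord -mulr_natl.
have n0 : 0 <= (n%:R : R) by [].
nra.
Qed.

Lemma rnorm_scale (n : nat) (v w : 'rV[R]_n) s : 0 <= s ->
  (forall j, `|w 0 j| <= s * `|v 0 j|) -> rnorm w <= s * rnorm v.
Proof.
move=> s0 hv; rewrite /rnorm -(ger0_norm s0) -sqrtr_sqr -sqrtrM ?sqr_ge0 //.
apply: ler_wsqrtr; rewrite mulr_sumr; apply: ler_sum => j _.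
have := hv j => h.
have a0 : 0 <= `|w 0 j| by []. have b0 : 0 <= `|v 0 j| by [].
rewrite -(real_normK (num_real (w 0 j))) -(real_normK (num_real (v 0 j))); nra.
Qed.

Lemma gen_bounds (Omega : set 'rV[K]_d) :
  (exists c, 0 < c /\ forall x y h, Omega x -> Omega y -> hnorm modu h = 1 -> c <= Phi x y h) ->
  affine_stability_bounds conj modu A b Omega.
Proof.
move=> [c [c0 Hmin]].
have K1 := Kall_ge1.
have Kp : 0 < Kall by apply: lt_le_trans K1.
have sc : 0 < Num.sqrt c by rewrite sqrtr_gt0.
exists ((m%:R + 1) * Kall), ((m%:R + 1) * (2 * Kall ^+ 2)), (Num.sqrt c / (2 * Kall)), (Num.sqrt c).
split.
  have m1 : (0:R) < m%:R + 1 by have := ler0n R m; lra.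
  split; [exact: mulr_gt0 | rewrite mulr_gt0 // mulr_gt0 // exprn_gt0 //
         | rewrite divr_gt0 // mulr_gt0 // | done].
move=> x y Ox Oy.
have low2 := @lower2 Omega c c0 Hmin x y Ox Oy.
set X := hnorm modu x; set Y := hnorm modu y; set t := hnorm modu (x - y).
have X0 : 0 <= X by exact: hnorm_ge0.
have Y0 : 0 <= Y by exact: hnorm_ge0.
have t0 : 0 <= t by exact: hnorm_ge0.
have comp j : [/\ (Mab conj modu A b x - Mab conj modu A b y) 0 j =
      modu (hdot conj (row j A) x + b 0 j) - modu (hdot conj (row j A) y + b 0 j),
    (M2ab conj modu A b x - M2ab conj modu A b y) 0 j =
      (modu (hdot conj (row j A) x + b 0 j) - modu (hdot conj (row j A) y + b 0 j)) *
      (modu (hdot conj (row j A) x + b 0 j) + modu (hdot conj (row j A) y + b 0 j)),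
    0 <= modu (hdot conj (row j A) x + b 0 j) <= Kall * (1 + X),
    0 <= modu (hdot conj (row j A) y + b 0 j) <= Kall * (1 + Y) &
    `|modu (hdot conj (row j A) x + b 0 j) - modu (hdot conj (row j A) y + b 0 j)|
      <= Kall * t].
  split; rewrite ?mxE ?Hge0 ?u_le //.
  - ring.
  - apply: le_trans (modu_diff _ _) _.
    have -> : hdot conj (row j A) x + b 0 j - (hdot conj (row j A) y + b 0 j) =
      hdot conj (row j A) (x - y) by rewrite hdotB; ring.
    exact: dot_le.
split.
- set s := 2 * Kall * (1 + X + Y).
  have sp : 0 < s by rewrite mulr_gt0 ?mulr_gt0 //; lra.
  have hs : rnorm (M2ab conj modu A b x - M2ab conj modu A b y) <=
            s * rnorm (Mab conj modu A b x - Mab conj modu A b y).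
    apply: rnorm_scale; first exact: ltW.
    move=> j; have [-> -> /andP[a0 a1] /andP[b0 b1] _] := comp j.
    rewrite normrM mulrC ler_wpM2r // ger0_norm ?addr_ge0 //.
    rewrite /s; nra.
  have e : Num.sqrt c / (2 * Kall) / (1 + X + Y) * t = (Num.sqrt c * t) / s.
    rewrite /s; field; apply/andP; split; apply: lt0r_neq0 => //; lra.
  rewrite e ler_pdivrMr // [X in _ <= X]mulrC; exact: le_trans low2 hs.
- rewrite -mulrA; apply: rnorm_unif; first by rewrite mulr_ge0 // ltW.
  by move=> j; have [-> _ _ _ h] := comp j.
- exact: low2.
- rewrite -!mulrA; apply: rnorm_unif; first by rewrite !mulr_ge0 // ?ltW //; lra.
  move=> j; have [_ -> /andP[a0 a1] /andP[b0 b1] h] := comp j.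
  rewrite normrM [X in _ * X <= _]ger0_norm ?addr_ge0 //.
  have hh : `|modu (hdot conj (row j A) x + b 0 j) - modu (hdot conj (row j A) y + b 0 j)| *
    (modu (hdot conj (row j A) x + b 0 j) + modu (hdot conj (row j A) y + b 0 j))
    <= (Kall * t) * (Kall * (1 + X) + Kall * (1 + Y)).
    apply: ler_pM => //; first by rewrite addr_ge0.
    exact: lerD.
  apply: le_trans hh _.
  have -> : Kall * t * (Kall * (1 + X) + Kall * (1 + Y)) = (Kall ^+ 2 * t) * (2 + X + Y) by ring.
  have -> : 2 * (Kall * (Kall * ((1 + X + Y) * t))) = (Kall ^+ 2 * t) * (2 * (1 + X + Y)) by ring.
  apply: ler_wpM2l; first by rewrite mulr_ge0 // exprn_ge0 // ltW.
  lra.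
Qed.
End Gen.
Section Topo.
Variable R : realType.

Lemma minpos (T : topologicalType) (D : set T) (f : T -> R) :
  compact D -> continuous f -> (forall t, D t -> 0 < f t) ->
  exists c : R, 0 < c /\ forall t, D t -> c <= f t.
Proof.
move=> cD cf fp.
case: (pselect (D !=set0)) => [D0|D0]; last first.
  exists 1; split => // t Dt; exfalso; apply: D0; by exists t.
have cfD : {within D, continuous f} by apply: continuous_subspaceT.
have [t0 /set_mem Dt0 ht0] := compact_EVT_min D0 cD cfD.
exists (f t0); split; first exact: fp.
by move=> t Dt; apply: ht0; apply/mem_set.
Qed.

Lemma cfst (U V : topologicalType) : continuous (fun p : U * V => p.1).
Proof. move=> p. have := @cvg_fst U V (nbhs p.1) (nbhs p.2) _. exact. Qed.
Lemma csnd (U V : topologicalType) : continuous (fun p : U * V => p.2).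
Proof. by case=> a b; apply: cvg_snd. Qed.

Lemma cD (T : topologicalType) (f g : T -> R) :
  continuous f -> continuous g -> continuous (fun x => f x + g x).
Proof. by move=> hf hg x; apply: cvgD; [apply: hf | apply: hg]. Qed.
Lemma cM (T : topologicalType) (f g : T -> R) :
  continuous f -> continuous g -> continuous (fun x => f x * g x).
Proof. by move=> hf hg x; apply: cvgM; [apply: hf | apply: hg]. Qed.
Lemma cB (T : topologicalType) (f g : T -> R) :
  continuous f -> continuous g -> continuous (fun x => f x - g x).
Proof. by move=> hf hg x; apply: cvgB; [apply: hf | apply: hg]. Qed.
Lemma cX2 (T : topologicalType) (f : T -> R) :
  continuous f -> continuous (fun x => f x ^+ 2).
Proof. by move=> hf; apply: cM. Qed.
Lemma cC (T : topologicalType) (c : R) : continuous (fun _ : T => c).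
Proof. exact: cst_continuous. Qed.
Lemma cComp (T U : topologicalType) (f : T -> U) (g : U -> R) :
  continuous f -> continuous g -> continuous (fun x => g (f x)).
Proof. by move=> hf hg x; apply: continuous_comp; [apply: hf | apply: hg]. Qed.

Lemma cSum (T : topologicalType) n (F : 'I_n -> T -> R) :
  (forall i, continuous (F i)) -> continuous (fun x => \sum_(i < n) F i x).
Proof.
elim: n F => [|n IH] F hF.
  have -> : (fun x => \sum_(i < 0) F i x) = (fun _ => 0) by apply: funext => x; rewrite big_ord0.
  exact: cC.
have -> : (fun x => \sum_(i < n.+1) F i x) =
  (fun x => \sum_(i < n) F (widen_ord (leqnSn n) i) x + F ord_max x).
  by apply: funext => x; rewrite big_ord_recr.
apply: cD; last exact: hF.
by apply: IH => i; apply: hF.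
Qed.

Lemma ccoord (T : topologicalType) d (f : T -> 'rV[R]_d) i :
  continuous f -> continuous (fun x => f x 0 i).
Proof. move=> hf x; have h2 := @coord_continuous R 1 d 0 i; exact: (continuous_comp (hf x) (h2 (f x))). Qed.

Lemma box_compact d : compact [set v : 'rV[R]_d | forall i, `[-1, 1]%classic (v ord0 i)].
Proof.
have := @rV_compact R d (fun=> `[-1, 1]%classic) (fun _ => @segment_compact R (-1) 1).
exact.
Qed.

Lemma sq_le1 (x : R) (s : R) : 0 <= s -> x ^+ 2 + s = 1 -> `[-1, 1]%classic x.
Proof. move=> s0 h; rewrite /= in_itv /=; apply/andP; split; nra. Qed.

End Topo.
Section RealCase.
Variable R : realType.

Lemma c11 (U V W : topologicalType) : continuous (fun p : (U * V) * W => p.1.1).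
Proof. move=> x; apply: (@continuous_comp _ _ _ (@fst (U * V) W) (@fst U V)); [exact: cfst | exact: cfst]. Qed.
Lemma c12 (U V W : topologicalType) : continuous (fun p : (U * V) * W => p.1.2).
Proof. move=> x; apply: (@continuous_comp _ _ _ (@fst (U * V) W) (@snd U V)); [exact: cfst | exact: csnd]. Qed.

Lemma sum_sq_box d (h : 'rV[R]_d) : \sum_i h 0 i ^+ 2 = 1 -> forall i, `[-1, 1]%classic (h ord0 i).
Proof.
move=> e i; apply: (@sq_le1 R _ (\sum_(j < d | j != i) h 0 j ^+ 2)).
  by apply: sumr_ge0 => j _; exact: sqr_ge0.
by rewrite -[RHS]e [RHS](bigD1 i).
Qed.

Lemma sqrt_eq1 (s : R) : 0 <= s -> Num.sqrt s = 1 -> s = 1.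
Proof. by move=> s0 e; rewrite -(sqr_sqrtr s0) e expr1n. Qed.

Lemma hnorm_real d (h : 'rV[R]_d) :
  hnorm (fun z : R => `|z|) h = Num.sqrt (\sum_i h 0 i ^+ 2).
Proof. by rewrite /hnorm; congr Num.sqrt; apply: eq_bigr => i _; rewrite real_normK ?num_real. Qed.

Lemma real_bounds m d (A : 'M[R]_(m, d)) (b : 'rV[R]_m) (Omega : set 'rV[R]_d) :
  affine_phase_retrievable id (fun z : R => `|z|) A b -> compact Omega ->
  affine_stability_bounds id (fun z : R => `|z|) A b Omega.
Proof.
move=> inj cO.
apply: (@gen_bounds R R id (fun z => `|z|) id (fun w s => w * s)).
- by move=> p.
- by move=> p q; exact: ler_normD.
- by move=> p; exact: normrN.
- exact: normr0.
- by move=> a p; exact: normrM.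
- by move=> t p; exact: normrM.
- by move=> p q; rewrite !real_normK ?num_real //; ring.
- by move=> t w s; rewrite mulrA.
set S := [set h : 'rV[R]_d | \sum_i h 0 i ^+ 2 = 1].
have sumc : continuous (fun h : 'rV[R]_d => \sum_i h 0 i ^+ 2).
  apply: cSum => i; apply: cX2 => x; exact: (@coord_continuous R 1 d 0 i).
have cS : compact S.
  apply: (subclosed_compact _ (box_compact R d)); last by move=> h /sum_sq_box.
  have -> : S = (fun h : 'rV[R]_d => \sum_i h 0 i ^+ 2) @^-1` [set 1] by [].
  apply: preimage_closed; last exact: closed_eq.
  by move=> x _; apply: sumc.
have cDm : compact ((Omega `*` Omega) `*` S) by apply: compact_setX => //; exact: compact_setX.
have [] := @minpos R _ _ (fun p => Phi R R id (fun w s => w * s) m d A b p.1.1 p.1.2 p.2) cDm.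
- rewrite /Phi /Sj /hdot.
  apply: cSum => j; apply: cX2; apply: cM.
    apply: cSum => i; apply: cM; first exact: cC.
    by apply: ccoord; exact: csnd.
  apply: cD; last exact: cC.
  apply: cD; (apply: cSum => i; apply: cM; first exact: cC).
    by apply: ccoord; exact: c11.
  by apply: ccoord; exact: c12.
- move=> [[x y] h] [_ hS].
  apply: (@Phi_pos R R id (fun z => `|z|) (fun w s => w * s)) => //.
  + exact: normr0.
  + by move=> p q; rewrite !real_normK ?num_real //; ring.
  + by rewrite hnorm_real hS sqrtr1.
move=> c [c0 hc]; exists c; split => // x y h Ox Oy hh.
apply: (hc ((x, y), h)); split => //=.
by rewrite /S /=; apply: sqrt_eq1; [apply: sumr_ge0 => i _; exact: sqr_ge0 | rewrite -hnorm_real].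
Qed.

End RealCase.
Section Cplx.
Variable R : realType.
Local Notation Y d := ('rV[R]_d * 'rV[R]_d)%type.

Definition psi {d} (P : Y d) : 'rV[R[i]]_d := \row_i Complex (P.1 0 i) (P.2 0 i).

Lemma psiK d (x : 'rV[R[i]]_d) : psi (realify x) = x.
Proof. by apply/rowP => i; rewrite !mxE; case: (x 0 i). Qed.

Definition Lc (w s : R[i]) : R := complex.Re w * complex.Re s + complex.Im w * complex.Im s.

Lemma ReD (u v : R[i]) : complex.Re (u + v) = complex.Re u + complex.Re v.
Proof. by case: u; case: v. Qed.
Lemma ImD (u v : R[i]) : complex.Im (u + v) = complex.Im u + complex.Im v.
Proof. by case: u; case: v. Qed.

Lemma Re_sum n (F : 'I_n -> R[i]) : complex.Re (\sum_i F i) = \sum_i complex.Re (F i).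
Proof. by elim/big_rec2: _ => // i y1 y2 _ <-; rewrite ReD. Qed.
Lemma Im_sum n (F : 'I_n -> R[i]) : complex.Im (\sum_i F i) = \sum_i complex.Im (F i).
Proof. by elim/big_rec2: _ => // i y1 y2 _ <-; rewrite ImD. Qed.

Definition reD {d} (a : 'rV[R[i]]_d) (H : Y d) : R :=
  \sum_i (complex.Re (a 0 i) * H.1 0 i + complex.Im (a 0 i) * H.2 0 i).
Definition imD {d} (a : 'rV[R[i]]_d) (H : Y d) : R :=
  \sum_i (complex.Re (a 0 i) * H.2 0 i - complex.Im (a 0 i) * H.1 0 i).

Lemma Re_hdot d (a : 'rV[R[i]]_d) H : complex.Re (hdot conjc a (psi H)) = reD a H.
Proof.
rewrite /hdot Re_sum; apply: eq_bigr => i _; rewrite mxE.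
by case: (a 0 i) => a1 a2 /=; ring.
Qed.
Lemma Im_hdot d (a : 'rV[R[i]]_d) H : complex.Im (hdot conjc a (psi H)) = imD a H.
Proof.
rewrite /hdot Im_sum; apply: eq_bigr => i _; rewrite mxE.
by case: (a 0 i) => a1 a2 /=; ring.
Qed.

Lemma cmodE (z : R[i]) : `|z| = (cmod z)%:C%C.
Proof. exact: normc_def. Qed.

Lemma cmod_ge0 (z : R[i]) : 0 <= cmod z.
Proof. exact: sqrtr_ge0. Qed.

Lemma cmod_sq (z : R[i]) : cmod z ^+ 2 = complex.Re z ^+ 2 + complex.Im z ^+ 2.
Proof. by rewrite /cmod sqr_sqrtr // addr_ge0 ?sqr_ge0. Qed.

Lemma cmodD (p q : R[i]) : cmod (p + q) <= cmod p + cmod q.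
Proof. by have := ler_normD p q; rewrite !cmodE -rmorphD /= lecR. Qed.

Lemma cmodN (p : R[i]) : cmod (- p) = cmod p.
Proof. by case: p => a b; rewrite /cmod /= !sqrrN. Qed.

Lemma cmod0 : cmod (0 : R[i]) = 0.
Proof. by rewrite /cmod /= expr0n /= addr0 sqrtr0. Qed.

Lemma cmod_conj (a : R[i]) : cmod (conjc a) = cmod a.
Proof. by case: a => a b; rewrite /cmod /= sqrrN. Qed.

Lemma cmodM (a p : R[i]) : cmod (a * p) = cmod a * cmod p.
Proof. by apply: complexI; rewrite rmorphM /= -!cmodE normrM. Qed.

Lemma cmodR (t : R) : cmod t%:C%C = `|t|.
Proof. by rewrite /cmod /= expr0n /= addr0 sqrtr_sqr. Qed.

Lemma HLc (p q : R[i]) : cmod p ^+ 2 - cmod q ^+ 2 = Lc (p - q) (p + q).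
Proof. by rewrite !cmod_sq; case: p => a b; case: q => c e; rewrite /Lc /=; ring. Qed.

Lemma HLsc (t : R) (w s : R[i]) : Lc (t%:C%C * w) s = t * Lc w s.
Proof. by case: w => a b; rewrite /Lc /=; ring. Qed.

Lemma hnormC d (h : 'rV[R[i]]_d) :
  hnorm (@cmod R) h = Num.sqrt (\sum_i (complex.Re (h 0 i) ^+ 2 + complex.Im (h 0 i) ^+ 2)).
Proof. by rewrite /hnorm; congr Num.sqrt; apply: eq_bigr => i _; rewrite cmod_sq. Qed.

Lemma cre (T : topologicalType) d (a : 'rV[R[i]]_d) (g : T -> Y d) :
  continuous g -> continuous (fun p => reD a (g p)).
Proof.
move=> hg; rewrite /reD; apply: cSum => i; apply: cD; (apply: cM; first exact: cC).
  apply: ccoord => x; apply: (@continuous_comp _ _ _ g fst); [exact: hg | exact: cfst].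
apply: ccoord => x; apply: (@continuous_comp _ _ _ g snd); [exact: hg | exact: csnd].
Qed.
Lemma cim (T : topologicalType) d (a : 'rV[R[i]]_d) (g : T -> Y d) :
  continuous g -> continuous (fun p => imD a (g p)).
Proof.
move=> hg; rewrite /imD; apply: cSum => i; apply: cB; (apply: cM; first exact: cC).
  apply: ccoord => x; apply: (@continuous_comp _ _ _ g snd); [exact: hg | exact: csnd].
apply: ccoord => x; apply: (@continuous_comp _ _ _ g fst); [exact: hg | exact: cfst].
Qed.

Lemma cplx_bounds m d (A : 'M[R[i]]_(m, d)) (b : 'rV[R[i]]_m) (Omega : set 'rV[R[i]]_d) :
  affine_phase_retrievable (@conjc R) (@cmod R) A b -> compactC Omega ->
  affine_stability_bounds (@conjc R) (@cmod R) A b Omega.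
Proof.
move=> inj cO.
apply: (@gen_bounds R R[i] conjc (@cmod R) (fun t => t%:C%C) Lc).
- exact: cmod_ge0.
- exact: cmodD.
- exact: cmodN.
- exact: cmod0.
- by move=> a p; rewrite cmodM cmod_conj.
- by move=> t p; rewrite cmodM cmodR.
- exact: HLc.
- exact: HLsc.
set S := [set H : Y d | \sum_i (H.1 0 i ^+ 2 + H.2 0 i ^+ 2) = 1].
have sumc : continuous (fun H : Y d => \sum_i (H.1 0 i ^+ 2 + H.2 0 i ^+ 2)).
  apply: cSum => i; apply: cD; apply: cX2; apply: ccoord; [exact: cfst | exact: csnd].
have cS : compact S.
  apply: (subclosed_compact _ (compact_setX (box_compact R d) (box_compact R d))); last first.
    move=> H e; rewrite /S /= in e.
    split => i /=;
    (have ei : H.1 0 i ^+ 2 + H.2 0 i ^+ 2 + \sum_(j < d | j != i) (H.1 0 j ^+ 2 + H.2 0 j ^+ 2) = 1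
      by rewrite -[RHS]e [RHS](bigD1 i));
    (have s0 : 0 <= \sum_(j < d | j != i) (H.1 0 j ^+ 2 + H.2 0 j ^+ 2)
      by apply: sumr_ge0 => j _; rewrite addr_ge0 ?sqr_ge0).
      apply: (@sq_le1 R _ (H.2 0 i ^+ 2 + \sum_(j < d | j != i) (H.1 0 j ^+ 2 + H.2 0 j ^+ 2))).
        by rewrite addr_ge0 ?sqr_ge0.
      by rewrite addrA.
    apply: (@sq_le1 R _ (H.1 0 i ^+ 2 + \sum_(j < d | j != i) (H.1 0 j ^+ 2 + H.2 0 j ^+ 2))).
      by rewrite addr_ge0 ?sqr_ge0.
    by rewrite -[RHS]ei; ring.
  have -> : S = (fun H : Y d => \sum_i (H.1 0 i ^+ 2 + H.2 0 i ^+ 2)) @^-1` [set 1] by [].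
  apply: preimage_closed; last exact: closed_eq.
  by move=> x _; apply: sumc.
have cDm : compact (((realify (R:=R) (d:=d)) @` Omega `*` (realify (R:=R) (d:=d)) @` Omega) `*` S).
  by apply: compact_setX => //; exact: compact_setX.
have [] := @minpos R _ _ (fun p => Phi R R[i] conjc Lc m d A b (psi p.1.1) (psi p.1.2) (psi p.2)) cDm.
- have -> : (fun p : (Y d * Y d) * Y d => Phi R R[i] conjc Lc m d A b (psi p.1.1) (psi p.1.2) (psi p.2)) =
    (fun p => \sum_(j < m) (reD (row j A) p.2 * (reD (row j A) p.1.1 + reD (row j A) p.1.2 +
        (complex.Re (b 0 j) + complex.Re (b 0 j))) +
      imD (row j A) p.2 * (imD (row j A) p.1.1 + imD (row j A) p.1.2 +
        (complex.Im (b 0 j) + complex.Im (b 0 j)))) ^+ 2).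
    apply: funext => p; rewrite /Phi; apply: eq_bigr => j _.
    by rewrite /Sj /Lc !ReD !ImD !Re_hdot !Im_hdot.
  apply: cSum => j; apply: cX2; apply: cD; apply: cM.
  + exact: cre (csnd _ _).
  + apply: cD; last exact: cC.
    by apply: cD; [exact: cre (c11 _ _ _) | exact: cre (c12 _ _ _)].
  + exact: cim (csnd _ _).
  + apply: cD; last exact: cC.
    by apply: cD; [exact: cim (c11 _ _ _) | exact: cim (c12 _ _ _)].
- move=> [[P Q] H] [_ hS].
  apply: (@Phi_pos R R[i] conjc (@cmod R) Lc) => //.
  + exact: cmod_ge0.
  + exact: cmod0.
  + exact: HLc.
  + rewrite hnormC -[RHS]sqrtr1 -hS; congr Num.sqrt; apply: eq_bigr => i _.
    by rewrite mxE.
move=> c [c0 hc]; exists c; split => // x y h Ox Oy hh.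
have := hc ((realify x, realify y), realify h).
rewrite !psiK; apply.
split; first by split; [exists x | exists y].
rewrite /S /=; apply: sqrt_eq1.
  by apply: sumr_ge0 => i _; rewrite addr_ge0 ?sqr_ge0.
rewrite -hh hnormC; congr Num.sqrt; apply: eq_bigr => i _; by rewrite !mxE.
Qed.

End Cplx.

Theorem theorem4p1 (R : realType) :
  (* H = R *)
  (forall (m d : nat) (A : 'M[R]_(m, d)) (b : 'rV[R]_m) (Omega : set 'rV[R]_d),
     affine_phase_retrievable id (fun z : R => `|z|) A b ->
     compact Omega ->
     affine_stability_bounds id (fun z : R => `|z|) A b Omega)
  /\
  (* H = C *)
  (forall (m d : nat) (A : 'M[R[i]]_(m, d)) (b : 'rV[R[i]]_m)
          (Omega : set 'rV[R[i]]_d),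
     affine_phase_retrievable (@conjc R) (@cmod R) A b ->
     compactC Omega ->
     affine_stability_bounds (@conjc R) (@cmod R) A b Omega).
Proof.
split => [m d A b Omega|m d A b Omega]; [exact: real_bounds | exact: cplx_bounds].
Qed.
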